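(* For every integer $n\ge0$, the real vector space $\operatorname{Infr}_n$ of inframonogenic homogeneous polynomials of degree $n$ has dimension $6n+3$ over $\mathbb{R}$.
   Context: $\mathbb{H}$ denotes the real quaternions with basis $e_0=1,e_1,e_2,e_3$ and $e_1^2=e_2^2=e_3^2=e_1e_2e_3=-1$; $\mathbb{R}^3$ is identified with the reduced quaternions $x_0+x_1e_1+x_2e_2$. $\operatorname{Infr}_n$ is the set of functions $f=f_0+f_1e_1+f_2e_2$ where each $f_i$ is a real homogeneous polynomial of degree $n$ in $x_0,x_1,x_2$, such that $\overline{\partial} f\overline{\partial}=0$. Here, with $\partial_i=\partial/\partial x_i$, $\overline{\partial} g=\partial_0 g+e_1\partial_1 g+e_2\partial_2 g$ (left action), $g\overline{\partial}=\partial_0 g+(\partial_1 g)e_1+(\partial_2 g)e_2$ (right action), and $\overline{\partial} f\overline{\partial}:=\overline{\partial}(f\overline{\partial})$. *)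

(* Defs.v *)
From HB Require Import structures.
From mathcomp Require Import all_boot all_order all_algebra.
From mathcomp Require Import mpoly.
From mathcomp Require Import reals.

Set Implicit Arguments.
Unset Strict Implicit.
Unset Printing Implicit Defensive.

Import Order.TTheory GRing.Theory Num.Theory.
Local Open Scope ring_scope.

(* q = q0 + q1 e1 + q2 e2 + q3 e3, with Hamilton's rules               *)
(* e1^2 = e2^2 = e3^2 = e1 e2 e3 = -1.                                 *)
Record quat (P : Type) := Quat { q0 : P; q1 : P; q2 : P; q3 : P }.
Arguments Quat {P}.

Section Quaternions.
Variable P : comNzRingType.

Definition qadd (a b : quat P) : quat P :=
  Quat (q0 a + q0 b) (q1 a + q1 b) (q2 a + q2 b) (q3 a + q3 b).

Definition qmul (a b : quat P) : quat P :=
  Quat (q0 a * q0 b - q1 a * q1 b - q2 a * q2 b - q3 a * q3 b)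
       (q0 a * q1 b + q1 a * q0 b + q2 a * q3 b - q3 a * q2 b)
       (q0 a * q2 b - q1 a * q3 b + q2 a * q0 b + q3 a * q1 b)
       (q0 a * q3 b + q1 a * q2 b - q2 a * q1 b + q3 a * q0 b).

Definition qzero : quat P := Quat 0 0 0 0.
Definition qe1 : quat P := Quat 0 1 0 0.
Definition qe2 : quat P := Quat 0 0 1 0.

Definition qmap (h : P -> P) (a : quat P) : quat P :=
  Quat (h (q0 a)) (h (q1 a)) (h (q2 a)) (h (q3 a)).
End Quaternions.

Section Infr.
Variable R : reals.Real.type.

Definition var0 : 'I_3 := @Ordinal 3 0 isT.
Definition var1 : 'I_3 := @Ordinal 3 1 isT.
Definition var2 : 'I_3 := @Ordinal 3 2 isT.

Local Notation Pol := {mpoly (R)[3]}.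

Definition pd (i : 'I_3) (p : Pol) : Pol := mderiv i p.

Definition dbar_left (g : quat Pol) : quat Pol :=
  qadd (qmap (pd var0) g)
       (qadd (qmul (qe1 Pol) (qmap (pd var1) g))
             (qmul (qe2 Pol) (qmap (pd var2) g))).

Definition dbar_right (g : quat Pol) : quat Pol :=
  qadd (qmap (pd var0) g)
       (qadd (qmul (qmap (pd var1) g) (qe1 Pol))
             (qmul (qmap (pd var2) g) (qe2 Pol))).

Definition quat_of_triple (f : Pol * Pol * Pol) : quat Pol :=
  Quat f.1.1 f.1.2 f.2 0.

Definition Infr (n : nat) (f : Pol * Pol * Pol) : Prop :=
  [/\ f.1.1 \is n.-homog, f.1.2 \is n.-homog, f.2 \is n.-homog
    & dbar_left (dbar_right (quat_of_triple f)) = qzero Pol].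
End Infr.

Definition is_subspace (K : pzRingType) (V : lmodType K) (S : V -> Prop) :=
  S 0 /\ forall (a : K) (u v : V), S u -> S v -> S (a *: u + v).

Definition has_dim (K : pzRingType) (V : lmodType K) (S : V -> Prop) (d : nat) :=
  exists b : 'I_d -> V,
    [/\ forall i, S (b i),
        (forall c : 'I_d -> K, \sum_(i < d) c i *: b i = 0 -> forall i, c i = 0)
      & forall v, S v -> exists c : 'I_d -> K, v = \sum_(i < d) c i *: b i].

(* Main.v *)
Require Import Defs.
From HB Require Import structures.
From mathcomp Require Import all_boot all_order all_algebra.
From mathcomp Require Import ring zify.
From mathcomp Require Import mpoly.
From mathcomp Require Import reals.
Set Implicit Arguments. Unset Strict Implicit. Unset Printing Implicit Defensive.
Import Order.TTheory GRing.Theory Num.Theory.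
Local Open Scope ring_scope.
Section Q.
Variable P : comNzRingType.
Variables h0 h1 h2 : {additive P -> P}.
Definition DR (g : quat P) := qadd (qmap h0 g) (qadd (qmul (qmap h1 g) (qe1 P)) (qmul (qmap h2 g) (qe2 P))).
Definition DL (g : quat P) := qadd (qmap h0 g) (qadd (qmul (qe1 P) (qmap h1 g)) (qmul (qe2 P) (qmap h2 g))).
Lemma DRE a b c : DR (Quat a b c 0) = Quat (h0 a - h1 b - h2 c) (h0 b + h1 a) (h0 c + h2 a) (h2 b - h1 c).
Proof.
rewrite /DR /qadd /qmap /qe1 /qe2 /qmul; cbn [q0 q1 q2 q3]; rewrite !raddf0.
congr Quat; rewrite ?(mul0r,mulr0,mul1r,mulr1,subr0,sub0r,add0r,addr0); ring.
Qed.
Lemma DLE a b c d : DL (Quat a b c d) = Quat (h0 a - h1 b - h2 c) (h0 b + h1 a + h2 d) (h0 c - h1 d + h2 a) (h0 d + h1 c - h2 b).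
Proof.
rewrite /DL /qadd /qmap /qe1 /qe2 /qmul; cbn [q0 q1 q2 q3].
congr Quat; rewrite ?(mul0r,mulr0,mul1r,mulr1,subr0,sub0r,add0r,addr0); ring.
Qed.
Lemma DDE a b c : DL (DR (Quat a b c 0)) =
  Quat (h0 (h0 a) - h0 (h1 b) - h0 (h2 c) - h1 (h0 b) - h1 (h1 a) - h2 (h0 c) - h2 (h2 a))
       (h0 (h0 b) + h0 (h1 a) + h1 (h0 a) - h1 (h1 b) - h1 (h2 c) + h2 (h2 b) - h2 (h1 c))
       (h0 (h0 c) + h0 (h2 a) - h1 (h2 b) + h1 (h1 c) + h2 (h0 a) - h2 (h1 b) - h2 (h2 c))
       (h0 (h2 b) - h0 (h1 c) + h1 (h0 c) + h1 (h2 a) - h2 (h0 b) - h2 (h1 a)).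
Proof.
rewrite DRE DLE; congr Quat; rewrite ?(raddfB h0, raddfB h1, raddfB h2, raddfD h0, raddfD h1, raddfD h2, raddfN h0, raddfN h1, raddfN h2); ring.
Qed.
Lemma DD3gen a b c : (forall p, h0 (h2 p) = h2 (h0 p)) -> (forall p, h0 (h1 p) = h1 (h0 p)) ->
  (forall p, h1 (h2 p) = h2 (h1 p)) -> q3 (DL (DR (Quat a b c 0))) = 0.
Proof. move=> c02 c01 c12; rewrite DDE /= c02 c01 c12; ring. Qed.
End Q.
Section S.
Variable R : reals.Real.type.
Local Notation Pol := {mpoly R[3]}.
Lemma DDpol (f : Pol*Pol*Pol) : dbar_left (dbar_right (quat_of_triple f)) =
  DL (mderiv var0) (mderiv var1) (mderiv var2) (DR (mderiv var0) (mderiv var1) (mderiv var2) (Quat f.1.1 f.1.2 f.2 0)).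
Proof. by []. Qed.
Lemma cdd (i j : 'I_3) (p : Pol) m :
  (mderiv i (mderiv j p))@_m = ((m i).+1 * (((m + U_(i))%MM j)).+1)%:R * p@_(m + U_(i) + U_(j))%MM.
Proof. by rewrite !mcoeff_deriv mulr_natl mulnC mulrnA. Qed.
Definition comp (f : Pol*Pol*Pol) (k : nat) : Pol :=
  match k with 0 => f.1.1 | 1 => f.1.2 | _ => f.2 end.
Definition gf (f : Pol*Pol*Pol) (k : nat) (m : 'X_{1..3}) : R := (comp f k)@_m.
Definition T (g : nat -> 'X_{1..3} -> R) (i j : 'I_3) (k : nat) (m : 'X_{1..3}) : R :=
  ((m i).+1 * (((m + U_(i))%MM j)).+1)%:R * g k (m + U_(i) + U_(j))%MM.
Definition E0 g m := T g var0 var0 0 m - T g var0 var1 1 m - T g var0 var2 2 m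
   - T g var1 var0 1 m - T g var1 var1 0 m - T g var2 var0 2 m - T g var2 var2 0 m.
Definition E1 g m := T g var0 var0 1 m + T g var0 var1 0 m + T g var1 var0 0 m
   - T g var1 var1 1 m - T g var1 var2 2 m + T g var2 var2 1 m - T g var2 var1 2 m.
Definition E2 g m := T g var0 var0 2 m + T g var0 var2 0 m - T g var1 var2 1 m
   + T g var1 var1 2 m + T g var2 var0 0 m - T g var2 var1 1 m - T g var2 var2 2 m.

Lemma DD3 (f : Pol*Pol*Pol) :
  q3 (dbar_left (dbar_right (quat_of_triple f))) = 0.
Proof.
rewrite DDpol; apply: DD3gen => p; exact: mderiv_comm.
Qed.

Lemma DDcoef (f : Pol*Pol*Pol) m :
  [/\ (q0 (dbar_left (dbar_right (quat_of_triple f))))@_m = E0 (gf f) m,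
      (q1 (dbar_left (dbar_right (quat_of_triple f))))@_m = E1 (gf f) m &
      (q2 (dbar_left (dbar_right (quat_of_triple f))))@_m = E2 (gf f) m].
Proof.
rewrite DDpol DDE; cbn [q0 q1 q2].
by split; rewrite ?(mcoeffB, mcoeffD) !cdd.
Qed.

Lemma InfrE n f : Infr n f <->
  [/\ f.1.1 \is n.-homog, f.1.2 \is n.-homog, f.2 \is n.-homog &
   forall m, [/\ E0 (gf f) m = 0, E1 (gf f) m = 0 & E2 (gf f) m = 0]].
Proof.
split.
- case=> h1 h2 h3 hD; split => // m.
  have [<- <- <-] := DDcoef f m.
  rewrite hD /qzero; cbn [q0 q1 q2]. by split; apply: mcoeff0.
- case=> h1 h2 h3 hE; split => //.
  have hc := DDcoef f; have h3' := DD3 f.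
  move: hc h3'; case: (dbar_left _) => a b c d hc h3';
  have -> : d = 0 by exact: h3'.
  rewrite /qzero; congr Quat; apply/mpolyP => m.
  + have [e _ _] := hc m; have [z _ _] := hE m.
    by rewrite (e : a@_m = _) z; apply/esym; apply: mcoeff0.
  + have [_ e _] := hc m; have [_ z _] := hE m.
    by rewrite (e : b@_m = _) z; apply/esym; apply: mcoeff0.
  + have [_ _ e] := hc m; have [_ _ z] := hE m.
    by rewrite (e : c@_m = _) z; apply/esym; apply: mcoeff0.
Qed.

Lemma natf_neq0 (a b : nat) : ((a.+1 * b.+1)%:R : R) != 0.
Proof. by rewrite pnatr_eq0 muln_eq0. Qed.

Lemma mshift (b : 'X_{1..3}) (i j k : 'I_3) :
  (b + U_(i) + U_(j))%MM k = (b k + (i == k) + (j == k))%N.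
Proof. by rewrite !mnmDE !mnm1E. Qed.

Lemma uniq0 (g : nat -> 'X_{1..3} -> R) :
  (forall m, [/\ E0 g m = 0, E1 g m = 0 & E2 g m = 0]) ->
  (forall k (m : 'X_{1..3}), (m var0 <= 1)%N -> g k m = 0) ->
  forall m : 'X_{1..3}, (forall k, (k <= 2)%N -> g k m = 0).
Proof.
move=> hE h01.
suff H : forall a (m : 'X_{1..3}), (m var0 <= a.+1)%N -> forall k, (k <= 2)%N -> g k m = 0.
  by move=> m; apply: (H (m var0)); apply: leqW.
elim=> [|a IH] m hm k hk; first exact: h01.
case: (ltnP (m var0) a.+2) => hma; first exact: IH.
have ema : m var0 = a.+2 by apply/eqP; rewrite eqn_leq hm hma.
pose b := (m - U_(var0) - U_(var0))%MM.
have hb : (b + U_(var0) + U_(var0))%MM = m.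
  apply/mnmP => l; rewrite mshift !mnmBE !mnm1E.
  case: (var0 =P l) => [<-|_]; rewrite ?ema ?subn0 ?addn0 //= !subn1 /= !addn1 //.
have b0 : b var0 = a by rewrite !mnmBE !mnm1E eqxx ema !subn1.
have Z : forall k' (i j : 'I_3), ~~ ((i == var0) && (j == var0)) -> (k' <= 2)%N ->
    g k' (b + U_(i) + U_(j))%MM = 0.
  move=> k' i j hij hk'; apply: IH => //; rewrite mshift b0.
  by case: (i == var0) hij; case: (j == var0) => //= _; rewrite ?addn0 ?addn1 //.
have [e0 e1 e2] := hE b.
move: e0 e1 e2; rewrite /E0 /E1 /E2 /T hb.
rewrite !Z //.
rewrite !mulr0 !subr0 !addr0.
move=> /eqP; rewrite mulf_eq0 (negbTE (natf_neq0 _ _)) /= => /eqP e0.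
move=> /eqP; rewrite mulf_eq0 (negbTE (natf_neq0 _ _)) /= => /eqP e1.
move=> /eqP; rewrite mulf_eq0 (negbTE (natf_neq0 _ _)) /= => /eqP e2.
by case: k hk => [|[|[|k]]].
Qed.

Definition L := nat -> nat -> nat -> R.
Definition den (x : nat) : R := ((x.+1 * x.+2)%:R)^-1.
Definition new0 (x : nat) (P Q : L) (y z : nat) : R :=
  den x * (2 * (x.+1 * y.+1)%:R * Q 1%N y.+1 z + 2 * (x.+1 * z.+1)%:R * Q 2%N y z.+1
         + (y.+1 * y.+2)%:R * P 0%N y.+2 z + (z.+1 * z.+2)%:R * P 0%N y z.+2).
Definition new1 (x : nat) (P Q : L) (y z : nat) : R :=
  den x * (- (2 * (x.+1 * y.+1)%:R * Q 0%N y.+1 z) + (y.+1 * y.+2)%:R * P 1%N y.+2 z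
         + 2 * (y.+1 * z.+1)%:R * P 2%N y.+1 z.+1 - (z.+1 * z.+2)%:R * P 1%N y z.+2).
Definition new2 (x : nat) (P Q : L) (y z : nat) : R :=
  den x * (- (2 * (x.+1 * z.+1)%:R * Q 0%N y z.+1) + 2 * (y.+1 * z.+1)%:R * P 1%N y.+1 z.+1
         - (y.+1 * y.+2)%:R * P 2%N y.+2 z + (z.+1 * z.+2)%:R * P 2%N y z.+2).
Definition new (x : nat) (P Q : L) : L := fun k =>
  match k with 0 => new0 x P Q | 1 => new1 x P Q | _ => new2 x P Q end.
Fixpoint lev (D : nat -> L) (x : nat) : L * L :=
  match x with
  | 0 => (D 0%N, D 1%N)
  | x'.+1 => ((lev D x').2, new x' (lev D x').1 (lev D x').2)
  end.
Lemma levS D x : (lev D x.+1).1 = (lev D x).2. Proof. by []. Qed.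
Lemma lev0 D : (lev D 0).1 = D 0%N. Proof. by []. Qed.
Lemma lev1 D : (lev D 1).1 = D 1%N. Proof. by []. Qed.
Lemma levSS0 D x y z : (lev D x.+2).1 0%N y z = new0 x (lev D x).1 (lev D x.+1).1 y z. Proof. by []. Qed.
Lemma levSS1 D x y z : (lev D x.+2).1 1%N y z = new1 x (lev D x).1 (lev D x.+1).1 y z. Proof. by []. Qed.
Lemma levSS2 D x y z : (lev D x.+2).1 2%N y z = new2 x (lev D x).1 (lev D x.+1).1 y z. Proof. by []. Qed.

Definition Fk (D : nat -> L) (k : nat) (m : 'X_{1..3}) : R := (lev D (m var0)).1 k (m var1) (m var2).

Definition mkpol (n : nat) (c : 'X_{1..3} -> R) : Pol :=
  \sum_(m : 'X_{1..3 < n.+1} | mdeg m == n) c m *: 'X_[m].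

Lemma mkpol_coef n c m : (mkpol n c)@_m = if mdeg m == n then c m else 0.
Proof.
rewrite /mkpol raddf_sum /=.
case: ifP => hm.
- have hb : (mdeg m < n.+1)%N by rewrite (eqP hm).
  rewrite (bigD1 (BMultinom hb)) /=; last by [].
  rewrite mcoeffZ mcoeffX eqxx mulr1 big1 ?addr0 //.
  move=> i /andP [_ hi]; rewrite mcoeffZ mcoeffX.
  case: eqP => [e|]; last by rewrite mulr0.
  by exfalso; move/eqP: hi; apply; apply: val_inj.
- rewrite big1 // => i hi; rewrite mcoeffZ mcoeffX.
  case: eqP => [e|]; last by rewrite mulr0.
  by rewrite -e hi in hm.
Qed.

Lemma mkpol_homog n c : mkpol n c \is n.-homog.
Proof.
rewrite /mkpol; apply: rpred_sum => m hm; apply: dhomogZ.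
by rewrite dhomogX.
Qed.

Definition sol n D : Pol*Pol*Pol := (mkpol n (Fk D 0), mkpol n (Fk D 1), mkpol n (Fk D 2)).
Lemma gsol0 n D m : gf (sol n D) 0 m = if mdeg m == n then Fk D 0 m else 0.
Proof. exact: mkpol_coef. Qed.
Lemma gsol1 n D m : gf (sol n D) 1 m = if mdeg m == n then Fk D 1 m else 0.
Proof. exact: mkpol_coef. Qed.
Lemma gsol2 n D m : gf (sol n D) 2 m = if mdeg m == n then Fk D 2 m else 0.
Proof. exact: mkpol_coef. Qed.

Lemma e00 : (var0 == var0) = true. Proof. by []. Qed.
Lemma e11 : (var1 == var1) = true. Proof. by []. Qed.
Lemma e22 : (var2 == var2) = true. Proof. by []. Qed.
Lemma e01 : (var0 == var1) = false. Proof. by []. Qed.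
Lemma e02 : (var0 == var2) = false. Proof. by []. Qed.
Lemma e10 : (var1 == var0) = false. Proof. by []. Qed.
Lemma e12 : (var1 == var2) = false. Proof. by []. Qed.
Lemma e20 : (var2 == var0) = false. Proof. by []. Qed.
Lemma e21 : (var2 == var1) = false. Proof. by []. Qed.

Lemma den_ok x : den x * (x.+1 * x.+2)%:R = 1.
Proof. by rewrite /den mulVf // natf_neq0. Qed.

Lemma sol_eq n D m : [/\ E0 (gf (sol n D)) m = 0, E1 (gf (sol n D)) m = 0 & E2 (gf (sol n D)) m = 0].
Proof.
rewrite /E0 /E1 /E2 /T !gsol0 !gsol1 !gsol2 !mdegD !mdeg1.
case: (_ == n); last by split; ring.
rewrite /Fk !mshift !mnmDE !mnm1E !(e00, e11, e22, e01, e02, e10, e12, e20, e21) /= !addn0 !addn1.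
rewrite !levSS0 !levSS1 !levSS2 /new0 /new1 /new2.
have := den_ok (m var0).
move: (den _) => d.
move: (lev D (m var0)).1 (lev D (m var0).+1).1 => P Q.
move: (((m var0).+1 * (m var0).+2)%:R) => N hd.
by split; rewrite mulrA (mulrC N d) hd mul1r; ring.
Qed.

Definition mk3 (a y z : nat) : 'X_{1..3} := [multinom [tuple a; y; z]].
Lemma mk3_0 a y z : mk3 a y z var0 = a. Proof. by []. Qed.
Lemma mk3_1 a y z : mk3 a y z var1 = y. Proof. by []. Qed.
Lemma mk3_2 a y z : mk3 a y z var2 = z. Proof. by []. Qed.
Lemma mnm3P (m m' : 'X_{1..3}) : m var0 = m' var0 -> m var1 = m' var1 -> m var2 = m' var2 -> m = m'.
Proof.
move=> h0 h1 h2; apply/mnmP => i.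
case: i => [[|[|[|i]]] hi] //.
- by rewrite (_ : Ordinal hi = var0) //; apply: val_inj.
- by rewrite (_ : Ordinal hi = var1) //; apply: val_inj.
- by rewrite (_ : Ordinal hi = var2) //; apply: val_inj.
Qed.
Lemma mdeg3 (m : 'X_{1..3}) : mdeg m = (m var0 + m var1 + m var2)%N.
Proof.
rewrite mdegE !big_ord_recl big_ord0 addn0 addnA.
congr (_ + _ + _)%N; congr (m _); by apply: val_inj.
Qed.

Definition Aa (n s : nat) : nat := (n < s)%N.
Definition Yy (n s : nat) : nat := if (s <= n)%N then s else (s - n.+1)%N.
Definition Zz (n s : nat) : nat := (n - Aa n s - Yy n s)%N.
Definition M (n s : nat) : 'X_{1..3} := mk3 (Aa n s) (Yy n s) (Zz n s).

Lemma M_inj n s s' : (s < 2 * n + 1)%N -> (s' < 2 * n + 1)%N -> (M n s == M n s') = (s == s').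
Proof.
move=> hs hs'; apply/idP/idP => [/eqP e|/eqP -> //]; apply/eqP.
have e0 : M n s var0 = M n s' var0 by rewrite e.
have e1 : M n s var1 = M n s' var1 by rewrite e.
move: e0 e1; rewrite /M !mk3_0 !mk3_1 /Aa /Yy.
case: (leqP s n) => h1; case: (leqP s' n) => h2 /=; lia.
Qed.

Lemma M_deg n s : (s < 2 * n + 1)%N -> mdeg (M n s) = n.
Proof.
move=> hs; rewrite mdeg3 /M mk3_0 mk3_1 mk3_2 /Zz /Aa /Yy.
case: (leqP s n) => h1 /=; lia.
Qed.

Lemma M_0 n s : (M n s var0 <= 1)%N.
Proof. by rewrite /M mk3_0 /Aa; case: (n < s)%N. Qed.

Definition Sm (n : nat) (m : 'X_{1..3}) : nat := if m var0 == 0%N then m var1 else (n.+1 + m var1)%N.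

Lemma M_surj n (m : 'X_{1..3}) : mdeg m = n -> (m var0 <= 1)%N ->
  (Sm n m < 2 * n + 1)%N /\ m = M n (Sm n m).
Proof.
rewrite mdeg3 => hd h0; rewrite /Sm.
case: eqP => e0.
- split; first lia.
  apply: mnm3P; rewrite /M ?mk3_0 ?mk3_1 ?mk3_2 /Zz /Aa /Yy; case: (leqP (m var1) n) => h /=; lia.
- split; first lia.
  apply: mnm3P; rewrite /M ?mk3_0 ?mk3_1 ?mk3_2 /Zz /Aa /Yy; case: (leqP (n.+1 + m var1) n) => h /=; lia.
Qed.

Lemma key n k s t : (k < 3)%N -> (s < 2 * n + 1)%N -> (t < 6 * n + 3)%N ->
  ((k == (t %% 3)%N) && (M n s == M n (t %/ 3)%N)) = (t == 3 * s + k)%N.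
Proof.
move=> hk hs ht; rewrite M_inj //; last lia.
apply/andP/eqP => [[/eqP h1 /eqP h2]|h]; first lia.
split; apply/eqP; lia.
Qed.

Definition Dt (n t : nat) : nat -> L := fun a k y z =>
  ((k == (t %% 3)%N) && (mk3 a y z == M n (t %/ 3)%N))%:R.

Lemma bcoef n t k (m : 'X_{1..3}) : mdeg m = n -> (m var0 <= 1)%N -> (k <= 2)%N ->
  gf (sol n (Dt n t)) k m = ((k == (t %% 3)%N) && (m == M n (t %/ 3)%N))%:R.
Proof.
move=> hd h0 hk.
have hm : mk3 (m var0) (m var1) (m var2) = m by apply: mnm3P.
have HF : forall k', Fk (Dt n t) k' m = ((k' == (t %% 3)%N) && (m == M n (t %/ 3)%N))%:R.
  move=> k'; rewrite /Fk.
  have -> : (lev (Dt n t) (m var0)).1 = Dt n t (m var0) by case: (m var0) h0 => [|[|]].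
  by rewrite /Dt hm.
case: k hk => [|[|[|k]]] // _.
- by rewrite gsol0 hd eqxx HF.
- by rewrite gsol1 hd eqxx HF.
- by rewrite gsol2 hd eqxx HF.
Qed.

Lemma gfD u v k m : gf (u + v) k m = gf u k m + gf v k m.
Proof. by case: k => [|[|k]]; apply: mcoeffD. Qed.
Lemma gfZ a u k m : gf (a *: u) k m = a * gf u k m.
Proof. by case: k => [|[|k]]; apply: mcoeffZ. Qed.
Lemma gf0 k m : gf 0 k m = 0.
Proof. by case: k => [|[|k]]; apply: mcoeff0. Qed.
Lemma gfB u v k m : gf (u - v) k m = gf u k m - gf v k m.
Proof. by case: k => [|[|k]]; apply: mcoeffB. Qed.
Lemma gf_sum d (F : 'I_d -> Pol*Pol*Pol) k m :
  gf (\sum_(i < d) F i) k m = \sum_(i < d) gf (F i) k m.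
Proof. exact: (big_morph (fun f => gf f k m) (fun u v => gfD u v k m) (gf0 k m)). Qed.

Lemma Elin (g g1 g2 : nat -> 'X_{1..3} -> R) a :
  (forall k m, g k m = a * g1 k m + g2 k m) -> forall m,
  [/\ E0 g m = a * E0 g1 m + E0 g2 m, E1 g m = a * E1 g1 m + E1 g2 m &
      E2 g m = a * E2 g1 m + E2 g2 m].
Proof. by move=> H m; rewrite /E0 /E1 /E2 /T !H; split; ring. Qed.

Lemma Ezero (g : nat -> 'X_{1..3} -> R) :
  (forall k m, g k m = 0) -> forall m, [/\ E0 g m = 0, E1 g m = 0 & E2 g m = 0].
Proof. by move=> H m; rewrite /E0 /E1 /E2 /T !H; split; ring. Qed.

Lemma Infr0 n : Infr n (0 : Pol*Pol*Pol).
Proof.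
apply/InfrE; split; try exact: rpred0.
by apply: Ezero => k m; apply: gf0.
Qed.

Lemma Infr_lin n a (u v : Pol*Pol*Pol) : Infr n u -> Infr n v -> Infr n (a *: u + v).
Proof.
move=> /InfrE [hu1 hu2 hu3 hu] /InfrE [hv1 hv2 hv3 hv].
apply/InfrE; split.
- by apply: rpredD => //; apply: rpredZ.
- by apply: rpredD => //; apply: rpredZ.
- by apply: rpredD => //; apply: rpredZ.
move=> m.
have [-> -> ->] := Elin (g := gf (a *: u + v)) (g1 := gf u) (g2 := gf v) (a := a)
   (fun k m => etrans (gfD _ _ k m) (congr1 (fun x => x + _) (gfZ a u k m))) m.
by case: (hu m) => -> -> ->; case: (hv m) => -> -> ->; rewrite !mulr0 !addr0.
Qed.

Lemma Infr_sum n d (F : 'I_d -> Pol*Pol*Pol) : (forall i, Infr n (F i)) -> Infr n (\sum_(i < d) F i).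
Proof.
elim: d F => [|d IH] F H; first by rewrite big_ord0; exact: Infr0.
rewrite big_ord_recr; set S := (\sum_(i < d) _).
rewrite -(scale1r S); apply: Infr_lin; last exact: H.
by apply: IH => i; exact: H.
Qed.

Lemma sum_delta d (F : 'I_d -> R) (j : nat) (hj : (j < d)%N) :
  \sum_(i < d) F i * ((i : nat) == j)%:R = F (Ordinal hj).
Proof.
rewrite (bigD1 (Ordinal hj)) //= eqxx mulr1 big1 ?addr0 // => i hi.
have hi' : (i : nat) != j by [].
by rewrite (negbTE hi') mulr0.
Qed.
End S.

Lemma main_lemma (R : reals.Real.type) (n : nat) :
  is_subspace (Infr (R := R) n) /\ has_dim (Infr (R := R) n) (6 * n + 3)%N.
Proof.
split.
  by split; [exact: Infr0 | move=> a u v hu hv; exact: Infr_lin].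
exists (fun t : 'I_(6 * n + 3) => @sol R n (@Dt R n t)).
split.
- move=> t; apply/InfrE; split; try exact: mkpol_homog.
  exact: sol_eq.
- move=> c hc t.
  have ht := ltn_ord t.
  have hs : (t %/ 3 < 2 * n + 1)%N by lia.
  have hk : (t %% 3 <= 2)%N by lia.
  have hk' : (t %% 3 < 3)%N by lia.
  have := congr1 (fun f => gf f (t %% 3)%N (M n (t %/ 3)%N)) hc.
  rewrite /= gf_sum gf0.
  under eq_bigr => i _ do rewrite gfZ (bcoef _ _ (M_deg hs) (M_0 _ _) hk) (key hk' hs (ltn_ord i)).
  have hj : (3 * (t %/ 3) + t %% 3 < 6 * n + 3)%N by lia.
  rewrite (sum_delta _ hj).
  by rewrite (_ : Ordinal hj = t) //; apply: val_inj => /=; lia.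
- move=> v hv.
  exists (fun t : 'I_(6 * n + 3) => gf v (t %% 3)%N (M n (t %/ 3)%N)).
  set S := \sum_(i < _) _.
  have hw : Infr n (v - S).
    rewrite (_ : v - S = (-1) *: S + v); last by rewrite scaleN1r addrC.
    apply: Infr_lin; last exact: hv.
    apply: Infr_sum => i.
    rewrite -[X in Infr n X]addr0; apply: Infr_lin; last exact: Infr0.
    apply/InfrE; split; try exact: mkpol_homog.
    exact: sol_eq.
  have cz : forall k (m : 'X_{1..3}), (m var0 <= 1)%N -> (k <= 2)%N -> gf (v - S) k m = 0.
    move=> k m h0 hk.
    case: (boolP (mdeg m == n)) => hd.
    + have [hs hm] := M_surj (eqP hd) h0.
      move: hs hm; set s := Sm n m => hs hm.
      have hk' : (k < 3)%N by lia.
      rewrite hm gfB gf_sum.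
      under eq_bigr => i _ do rewrite gfZ (bcoef _ _ (M_deg hs) (M_0 _ _) hk) (key hk' hs (ltn_ord i)).
      have hj : (3 * s + k < 6 * n + 3)%N by lia.
      rewrite (sum_delta _ hj) /=.
      rewrite (_ : ((3 * s + k) %% 3)%N = k); last by lia.
      rewrite (_ : ((3 * s + k) %/ 3)%N = s); last by lia.
      by rewrite subrr.
    + move/InfrE: hw => [h1 h2 h3 _].
      case: k hk => [|[|[|k]]] // _.
      * exact: (dhomog_nemf_coeff h1 hd).
      * exact: (dhomog_nemf_coeff h2 hd).
      * exact: (dhomog_nemf_coeff h3 hd).
  have hE : forall m, [/\ E0 (gf (v - S)) m = 0, E1 (gf (v - S)) m = 0 & E2 (gf (v - S)) m = 0].
    by move/InfrE: hw => [_ _ _].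
  have all0 := uniq0 (g := gf (v - S)) hE
     (fun k m h0 => match k with 0 => cz 0%N m h0 isT | 1 => cz 1%N m h0 isT | _ => cz 2%N m h0 isT end).
  suff: v - S = 0 by move/eqP; rewrite subr_eq0 => /eqP.
  move: all0; set w := v - S; move: w => [[a b] c] H.
  have -> : (0 : {mpoly R[3]} * {mpoly R[3]} * {mpoly R[3]}) = ((0, 0), 0) by [].
  congr (_, _); [congr (_, _)|]; apply/mpolyP => m.
  + by apply: etrans (H m 0%N isT) _; apply/esym; apply: mcoeff0.
  + by apply: etrans (H m 1%N isT) _; apply/esym; apply: mcoeff0.
  + by apply: etrans (H m 2%N isT) _; apply/esym; apply: mcoeff0.
Qed.

Local Close Scope ring_scope.

Theorem theorem3p4 (R : reals.Real.type) (n : nat) :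
  is_subspace (Infr (R := R) n) /\ has_dim (Infr (R := R) n) (6 * n + 3).
Proof. exact: main_lemma. Qed.
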